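(* If $G=(V,E)$ is a word-representable graph with representation number $k>3$, then $G$ is not $3$-complete square-free uniform word-representable.
   Context: A graph $G=(V,E)$ is word-representable if there is a word $w$ over $V$, containing every letter of $V$, such that distinct $x,y\in V$ alternate in $w$ (deleting all other letters yields $xyxy\cdots$ or $yxyx\cdots$) iff $xy\in E$; $w$ represents $G$. A word is $k$-uniform if every letter occurs exactly $k$ times, and uniform if it is $k$-uniform for some $k$. The representation number of a word-representable graph is the least $k$ such that it is represented by a $k$-uniform word. For a word $w$ over $\Sigma$ and $S\subseteq\Sigma$, $w_S$ denotes the word obtained from $w$ by deleting all letters not in $S$. For an integer $p\ge1$, $w$ contains a $p$-complete square if there exists $S\subseteq\Sigma$ such that $w_S$ contains a factor $XX$ with $X\in S^+$ and $|X|\ge p$; otherwise $w$ is $p$-complete square-free. A graph $G$ is $p$-complete square-free uniform word-representable if it is represented by a uniform word $w$ that is $p$-complete square-free. *)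

(* Defs.v *)
From mathcomp Require Import all_boot.
Set Implicit Arguments. Unset Strict Implicit. Unset Printing Implicit Defensive.

Section WordRep.
Variable V : finType.

Definition restrict (S : pred V) (w : seq V) : seq V := filter S w.

(* x and y alternate in w: w_{x,y} has no two equal consecutive letters,
   i.e. it is xyxy... or yxyx... *)
Definition alternate (w : seq V) (x y : V) : bool :=
  sorted (fun a b => a != b) (restrict (mem [:: x; y]) w).

Definition represents (E : rel V) (w : seq V) : Prop :=
  (forall x : V, x \in w) /\
  (forall x y : V, x != y -> (alternate w x y <-> E x y)).

Definition word_representable (E : rel V) : Prop := exists w, represents E w.

Definition k_uniform (k : nat) (w : seq V) : Prop :=
  forall x : V, count_mem x w = k.

Definition uniform (w : seq V) : Prop := exists k, k_uniform k w.

Definition representation_number (E : rel V) (k : nat) : Prop :=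
  (exists w, k_uniform k w /\ represents E w) /\
  (forall k' w, k_uniform k' w -> represents E w -> k <= k').

Definition has_complete_square (p : nat) (w : seq V) : Prop :=
  exists (S : pred V) (u X v : seq V),
    restrict S w = u ++ X ++ X ++ v /\ p <= size X /\ all S X.

Definition complete_square_free (p : nat) (w : seq V) : Prop :=
  ~ has_complete_square p w.

Definition csf_uniform_word_representable (p : nat) (E : rel V) : Prop :=
  exists w, uniform w /\ complete_square_free p w /\ represents E w.

End WordRep.

(* Main.v *)
Require Import Defs.
From mathcomp Require Import all_boot zify.
Set Implicit Arguments. Unset Strict Implicit. Unset Printing Implicit Defensive.

Lemma alt3 (V : eqType) (x y a b c : V) :
  a \in [:: x; y] -> b \in [:: x; y] -> c \in [:: x; y] ->
  a != b -> b != c -> c = a.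
Proof.
rewrite !inE => /orP[]/eqP-> /orP[]/eqP-> /orP[]/eqP-> //; rewrite ?eqxx //.
Qed.

Lemma count2 (V : eqType) (x y : V) (w : seq V) : x != y ->
  count (mem [:: x; y]) w = count_mem x w + count_mem y w.
Proof.
move=> nxy; elim: w => //= z w IH; rewrite IH !inE.
case: (eqVneq z x) => [->|_]; case: (eqVneq z y) => [e|_] //=.
all: rewrite ?(negbTE nxy); lia.
Qed.

Lemma no_edge_word (V : finType) (E : rel V) :
  (forall x y : V, x != y -> ~~ E x y) ->
  exists w, k_uniform 2 w /\ represents E w.
Proof.
move=> noE; exists (enum V ++ rev (enum V)); split.
  by move=> x; rewrite count_cat count_rev count_uniq_mem ?enum_uniq // mem_enum.
split; first by move=> x; rewrite mem_cat mem_enum.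
move=> x y nxy; split; last by move=> Exy; move: (noE x y nxy); rewrite Exy.
rewrite /alternate /restrict filter_cat filter_rev.
set t := filter _ (enum V).
have ut : uniq t by rewrite filter_uniq ?enum_uniq.
have pt : perm_eq t [:: x; y].
  apply: uniq_perm => //=; first by rewrite inE nxy.
  by move=> z; rewrite mem_filter mem_enum andbT.
have := perm_size pt; case: t ut pt => [|a [|b [|c t]]] //= _ _ _.
by rewrite /= eqxx /= andbF.
Qed.

Theorem mainTheorem14 (V : finType) (E : rel V) (k : nat) :
  symmetric E -> irreflexive E ->
  word_representable E ->
  representation_number E k ->
  3 < k ->
  ~ csf_uniform_word_representable 3 E.
Proof.
move=> _ _ _ [_ kmin] k3 [w [[k' uw] [csf rw]]].
have kk' := kmin _ _ uw rw.
case: (boolP [exists x, exists y, (x != y) && E x y]) => [|/existsPn nE].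
  case/existsP=> x /existsP[y /andP[nxy Exy]].
  have al : alternate w x y by apply/(rw.2 _ _ nxy).
  apply: csf; exists (mem [:: x; y]).
  move: al; rewrite /alternate /restrict.
  have sz : size (filter (mem [:: x; y]) w) = k' + k'.
    by rewrite size_filter count2 // !uw.
  have all_t : all (mem [:: x; y]) (filter (mem [:: x; y]) w) by apply: filter_all.
  move: sz all_t; case: (filter _ w) => [|c1 [|c2 [|c3 [|c4 [|c5 [|c6 [|c7 [|c8 r]]]]]]]] /=;
    try (move=> e; exfalso; lia).
  move=> _ /and5P[h1 h2 h3 h4 /and5P[h5 h6 h7 h8 _]].
  move=> /and5P[n12 n23 n34 n45 /and4P[n56 n67 n78 _]].
  have e3 := alt3 h1 h2 h3 n12 n23.
  have e4 := alt3 h2 h3 h4 n23 n34.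
  have e5 := alt3 h3 h4 h5 n34 n45.
  have e6 := alt3 h4 h5 h6 n45 n56.
  have e7 := alt3 h5 h6 h7 n56 n67.
  have e8 := alt3 h6 h7 h8 n67 n78.
  exists [::], [:: c1; c2; c3; c4], r; split; last by split=> //=; rewrite h1 h2 h3 h4.
  by rewrite /= e8 e7 e6 e5 e4 e3.
have [w0 [u0 r0]] : exists w, k_uniform 2 w /\ represents E w.
  apply: no_edge_word => x y nxy; apply/negP => Exy.
  by move: (nE x); move/existsP; apply; exists y; rewrite nxy Exy.
have := kmin _ _ u0 r0; lia.
Qed.
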